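(* The image of $\omega:\mathbf{E}\to\mathbf{E}^+$, $\omega(X)=X^\dagger X$, is dense in $\mathbf{E}^+$: any polynomial function on $\mathbf{E}^+$ which vanishes on $\omega(\mathbf{E})$ is identically zero.
   Context: $\Lambda=\varinjlim\wedge(\mathbb{C}^N)$ is the infinite Grassmann algebra ($\mathbb{Z}_2$-graded, supercommutative). $V_{\mathbb{C}}$ is a complex superspace of superdimension $(m|2n)$ with nondegenerate even supersymmetric form, $V=V_{\mathbb{C}}\otimes\Lambda$ with the $\Lambda$-bilinearly extended form. $\mathbf{E}=\mathrm{End}_\Lambda(V)_{\bar0}$; the adjoint $A^\dagger$ is defined by $(Av,w)=(-1)^{[A][v]}(v,A^\dagger w)$; $\mathbf{E}^+=\{A\in\mathbf{E}:A^\dagger=A\}=(\mathrm{End}_{\mathbb{C}}(V_{\mathbb{C}})^+\otimes\Lambda)_{\bar0}$. A polynomial function on $\mathbf{E}^+$ is a function which, in coordinates $\sum_kb_k\lambda_k$ with respect to a homogeneous basis $b_k$ of the self-adjoint endomorphisms of $V_{\mathbb{C}}$, is a finite $\Lambda$-linear combination of monomials in the $\lambda_k$. *)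

(* Defs.v *)
From mathcomp Require Import all_boot all_algebra.
From mathcomp Require Import finmap.
From mathcomp Require Import complex.
From mathcomp Require Import Rstruct.

Set Implicit Arguments.
Unset Strict Implicit.
Unset Printing Implicit Defensive.

Import GRing.Theory.
Local Open Scope ring_scope.

Definition C : fieldType := (Rdefinitions.R)[i].

(* Grassmann algebra.  An element is a coefficient function on the    *)
(* Grassmann monomials e_S = e_{s1} ^ ... ^ e_{sk} (s1 < ... < sk),    *)
(* S a finite set of generator indices.  Elements of the infinite      *)
(* Grassmann algebra Lambda = lim_N wedge(C^N) are exactly those       *)
(* coefficient functions whose support only involves generators below  *)
(* some bound N (predicate [gfin]).                                    *)
Notation Lam := ({fset nat} -> C).

Definition gfin (a : Lam) : Prop :=
  exists N : nat, forall S : {fset nat}, a S != 0 -> forall x, x \in S -> (x < N)%N.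

Definition gzero : Lam := fun _ => 0.
Definition gadd (a b : Lam) : Lam := fun S => a S + b S.
Definition gconst (c : C) : Lam := fun S => if S == fset0 then c else 0.

(* number of inversions needed to reorder e_T ^ e_U into e_{T u U} *)
Definition ginv_count (T U : {fset nat}) : nat :=
  (\sum_(t <- enum_fset T) \sum_(u <- enum_fset U) (u < t)%N)%N.

(* the Grassmann product: e_T e_U = (-1)^{inv(T,U)} e_{T u U} if disjoint *)
Definition gmul (a b : Lam) : Lam := fun S =>
  \sum_(T <- enum_fset (fpowerset S))
     (-1) ^+ ginv_count T (S `\` T)%fset * a T * b (S `\` T)%fset.

Definition gprod (s : seq Lam) : Lam := foldr gmul (gconst 1) s.

(* homogeneous of parity q (false = even, true = odd) *)
Definition gpar (q : bool) (a : Lam) : Prop :=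
  forall S : {fset nat}, odd #|` S| != q -> a S = 0.

Definition ginvol (b : bool) (a : Lam) : Lam :=
  fun S => if b then (-1) ^+ #|` S| * a S else a S.

(* The superspace V_C = C^(m|2n): the basis vector e_i has parity      *)
(* [spar m i] (the first m are even, the last 2n odd).                 *)
Definition sdim (m n : nat) : nat := (m + n.*2)%N.
Definition spar (m n : nat) (i : 'I_(sdim m n)) : bool := (m <= i)%N.

Definition even_form m n (G : 'M[C]_(sdim m n)) : Prop :=
  forall i j, spar i != spar j -> G i j = 0.
Definition supersym_form m n (G : 'M[C]_(sdim m n)) : Prop :=
  forall i j, G j i = (-1) ^+ (spar i && spar j) * G i j.
Definition nondeg_form m n (G : 'M[C]_(sdim m n)) : Prop :=
  G \in unitmx.

Definition vecC m n := 'I_(sdim m n) -> C.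
Definition formC m n (G : 'M[C]_(sdim m n)) (v w : vecC m n) : C :=
  \sum_i \sum_j G i j * v i * w j.
Definition actC m n (B : 'M[C]_(sdim m n)) (v : vecC m n) : vecC m n :=
  fun i => \sum_j B i j * v j.
Definition homogC m n (r : bool) (v : vecC m n) : Prop :=
  forall i, spar i != r -> v i = 0.
Definition homogEndC m n (q : bool) (B : 'M[C]_(sdim m n)) : Prop :=
  forall i j, (spar i (+) spar j) != q -> B i j = 0.
Definition selfadjC_hom m n (G : 'M[C]_(sdim m n)) (q : bool) (B : 'M[C]_(sdim m n)) :=
  homogEndC q B /\
  forall (r : bool) (v w : vecC m n), homogC r v ->
    formC G (actC B v) w = (-1) ^+ (q && r) * formC G v (actC B w).
Definition selfadjC m n (G : 'M[C]_(sdim m n)) (B : 'M[C]_(sdim m n)) : Prop :=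
  exists B0 B1, B = B0 + B1 /\ selfadjC_hom G false B0 /\ selfadjC_hom G true B1.

Definition homog_basis_sa m n (G : 'M[C]_(sdim m n)) (K : nat)
    (b : 'I_K -> 'M[C]_(sdim m n)) (q : 'I_K -> bool) : Prop :=
  (forall k, selfadjC_hom G (q k) (b k)) /\
  (forall c : 'I_K -> C, \sum_k c k *: b k = 0 -> forall k, c k = 0) /\
  (forall B, selfadjC G B -> exists c : 'I_K -> C, B = \sum_k c k *: b k).

(* V = V_C (x) Lambda.  A vector is v = sum_i e_i (x) v_i, v : 'I_d -> Lam *)
(* with all v_i in Lambda.  An even Lambda-linear endomorphism X is    *)
(* given by X(e_j (x) 1) = sum_i e_i (x) X i j with X i j of parity    *)
(* p(i)+p(j); then (X v)_i = sum_j X i j v_j.                          *)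
Definition vecL m n := 'I_(sdim m n) -> Lam.
Definition endL m n := 'I_(sdim m n) -> 'I_(sdim m n) -> Lam.

Definition inV m n (v : vecL m n) : Prop := forall i, gfin (v i).

Definition inE m n (X : endL m n) : Prop :=
  forall i j, gfin (X i j) /\ gpar (spar i (+) spar j) (X i j).

Definition actL m n (X : endL m n) (v : vecL m n) : vecL m n :=
  fun i S => \sum_j gmul (X i j) (v j) S.

Definition mulL m n (X Y : endL m n) : endL m n :=
  fun i j S => \sum_k gmul (X i k) (Y k j) S.

(* the Lambda-bilinear extension of the form:                          *)
(* (e_i (x) a, e_j (x) b) = (-1)^{|a| p(j)} (e_i,e_j) a b               *)
Definition formL m n (G : 'M[C]_(sdim m n)) (v w : vecL m n) : Lam :=
  fun S => \sum_i \sum_j G i j * gmul (ginvol (spar j) (v i)) (w j) S.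

Definition is_adjoint m n (G : 'M[C]_(sdim m n)) (X Y : endL m n) : Prop :=
  inE Y /\ forall v w : vecL m n, inV v -> inV w ->
    formL G (actL X v) w = formL G v (actL Y w).

Definition inEplus m n (G : 'M[C]_(sdim m n)) (A : endL m n) : Prop :=
  inE A /\ is_adjoint G A A.

Definition in_omega_image m n (G : 'M[C]_(sdim m n)) (A : endL m n) : Prop :=
  exists X Y : endL m n, inE X /\ is_adjoint G X Y /\ A = mulL Y X.

(* The element sum_k b_k (x) lambda_k of End_C(V_C) (x) Lambda as a matrix: *)
(* (b (x) lam)(e_j (x) 1) = (-1)^{|lam| p(j)} sum_i e_i (x) b i j lam       *)
Definition coordsL m n (K : nat) (b : 'I_K -> 'M[C]_(sdim m n)) (q : 'I_K -> bool)
    (lam : 'I_K -> Lam) : endL m n :=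
  fun i j S => \sum_k (-1) ^+ (q k && spar j) * b k i j * lam k S.

Definition is_coords m n (K : nat) (b : 'I_K -> 'M[C]_(sdim m n)) (q : 'I_K -> bool)
    (A : endL m n) (lam : 'I_K -> Lam) : Prop :=
  (forall k, gfin (lam k) /\ gpar (q k) (lam k)) /\ A = coordsL b q lam.

Definition polyfun m n (G : 'M[C]_(sdim m n)) (K : nat)
    (b : 'I_K -> 'M[C]_(sdim m n)) (q : 'I_K -> bool) (f : endL m n -> Lam) : Prop :=
  exists P : seq (Lam * seq 'I_K),
    (forall cs, List.In cs P -> gfin cs.1) /\
    forall A lam, inEplus G A -> is_coords b q A lam ->
      f A = foldr gadd gzero
              [seq gmul cs.1 (gprod [seq lam k | k <- cs.2]) | cs <- P].

(* Main.v *)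
Require Import Defs.
From mathcomp Require Import all_boot all_algebra.
From mathcomp Require Import finmap.
From mathcomp Require Import complex.
From mathcomp Require Import Rstruct.
From Stdlib Require Import FunctionalExtensionality ClassicalEpsilon.
From mathcomp Require Import ring zify.

Set Implicit Arguments.
Unset Strict Implicit.
Unset Printing Implicit Defensive.
Import GRing.Theory.
Local Open Scope fset_scope.
Local Open Scope ring_scope.

Implicit Types (a b c : Lam) (S T U V R : {fset nat}).

Definition ps (S : {fset nat}) : seq {fset nat} := enum_fset (fpowerset S).

Lemma mem_ps T S : (T \in ps S) = (T `<=` S).
Proof. by rewrite -fpowersetE. Qed.

Lemma sum_ps_sub U S (g : {fset nat} -> C) : U `<=` S ->
  \sum_(T <- ps U) g T = \sum_(T <- ps S) (if T `<=` U then g T else 0).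
Proof.
move=> sUS; rewrite -big_mkcond -big_filter /=; apply: perm_big.
apply: uniq_perm; [exact: fset_uniq| by rewrite filter_uniq // fset_uniq|].
move=> T; rewrite mem_filter !mem_ps.
by case: (boolP (T `<=` U)) => //= h; rewrite (fsubset_trans h sUS).
Qed.

Lemma sum_ps_one S X (g : {fset nat} -> C) : X `<=` S ->
  \sum_(T <- ps S) (if T == X then g T else 0) = g X.
Proof.
move=> sXS; rewrite -big_mkcond -big_filter.
by rewrite (filter_pred1_uniq (fset_uniq _)) ?mem_ps // big_seq1.
Qed.

Lemma sumn_fsetU (T V : {fset nat}) (g : nat -> nat) : [disjoint T & V] ->
  (\sum_(x <- enum_fset (T `|` V)) g x = \sum_(x <- enum_fset T) g x + \sum_(x <- enum_fset V) g x)%N.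
Proof.
move=> dTV; rewrite -big_cat; apply: perm_big; apply: uniq_perm.
- exact: fset_uniq.
- rewrite cat_uniq !fset_uniq /= andbT; apply/hasPn => x xV.
  apply/negP => xT; move/fdisjointP: dTV => /(_ x xT); by rewrite xV.
- move=> x; rewrite mem_cat; exact: in_fsetU.
Qed.

Lemma ginv_Ul T V R : [disjoint T & V] ->
  ginv_count (T `|` V) R = (ginv_count T R + ginv_count V R)%N.
Proof. by move=> d; rewrite /ginv_count sumn_fsetU. Qed.

Lemma ginv_Ur T V R : [disjoint V & R] ->
  ginv_count T (V `|` R) = (ginv_count T V + ginv_count T R)%N.
Proof.
by move=> d; rewrite /ginv_count -big_split; apply: eq_bigr => t _; rewrite sumn_fsetU.
Qed.

Lemma ginv0l U : ginv_count fset0 U = 0%N.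
Proof. by rewrite /ginv_count big_seq_fset0. Qed.
Lemma ginv0r U : ginv_count U fset0 = 0%N.
Proof. by rewrite /ginv_count big1 // => t _; rewrite big_seq_fset0. Qed.

Definition sg (T U : {fset nat}) : C := (-1) ^+ ginv_count T U.

Lemma gmulE a b S : gmul a b S = \sum_(T <- ps S) sg T (S `\` T) * a T * b (S `\` T).
Proof. by []. Qed.

Lemma set_reidx (T U V S : {fset nat}) : T `<=` U -> U `<=` S ->
  (V `<=` S `\` T) && (U == T `|` V) = (V == U `\` T).
Proof.
move=> /fsubsetP sTU /fsubsetP sUS; apply/idP/idP.
- case/andP => /fsubsetP sV /eqP ->; apply/eqP/fsetP => x; rewrite !inE.
  have := sV x; rewrite !inE.
  by case: (x \in V); case: (x \in T) => //= /(_ isT).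
- move/eqP => ->; apply/andP; split.
  + apply/fsubsetP => x; rewrite !inE => /andP[nT xU]; by rewrite nT sUS.
  + apply/eqP/fsetP => x; rewrite !inE; have := sTU x.
    by case: (x \in T); case: (x \in U) => //= /(_ isT).
Qed.

Lemma reidx (T S : {fset nat}) (F : {fset nat} -> C) : T `<=` S ->
  \sum_(U <- ps S) (if T `<=` U then F U else 0) =
  \sum_(V <- ps S) (if V `<=` S `\` T then F (T `|` V) else 0).
Proof.
move=> sTS.
transitivity (\sum_(V <- ps S) \sum_(U <- ps S)
   (if (V `<=` S `\` T) && (U == T `|` V) then F U else 0)); last first.
  apply: eq_bigr => V _; case: (boolP (V `<=` S `\` T)) => hV /=.
    rewrite sum_ps_one //.
    apply/fsubsetP => x; rewrite !inE; move/fsubsetP: hV => hV.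
    case/orP; [by move/(fsubsetP sTS)| by move/hV; rewrite !inE => /andP[]].
  by rewrite big1.
rewrite exchange_big /=; rewrite big_seq [RHS]big_seq; apply: eq_bigr => U.
rewrite mem_ps => sUS; case: (boolP (T `<=` U)) => hTU.
  under eq_bigr do rewrite (set_reidx _ hTU sUS).
  rewrite (eq_bigr (fun V => if V == U `\` T then F U else 0)); last first.
    by move=> V _; case: eqP.
  rewrite (sum_ps_one (fun _ => F U)) //.
  by apply/fsubsetP => x; rewrite !inE => /andP[_ /(fsubsetP sUS)].
rewrite big1 // => V _; case: (boolP (U == T `|` V)); rewrite ?andbF //.
by move/eqP => eU; move: hTU; rewrite eU fsubsetUl.
Qed.

Lemma sgD T V R : [disjoint T & V] -> [disjoint V & R] ->
  sg (T `|` V) R * sg T V = sg T (V `|` R) * sg V R.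
Proof.
move=> d1 d2; rewrite /sg ginv_Ul // ginv_Ur // !exprD.
by rewrite mulrC -!mulrA; congr (_ * _); rewrite mulrC.
Qed.

Lemma gmulA a b c S : gmul (gmul a b) c S = gmul a (gmul b c) S.
Proof.
rewrite gmulE.
transitivity (\sum_(U <- ps S) \sum_(T <- ps S) (if T `<=` U then
   sg U (S `\` U) * sg T (U `\` T) * a T * b (U `\` T) * c (S `\` U) else 0)).
  rewrite big_seq [RHS]big_seq; apply: eq_bigr => U; rewrite mem_ps => sUS.
  rewrite gmulE (sum_ps_sub _ sUS) mulr_sumr mulr_suml; apply: eq_bigr => T _.
  by case: ifP => _; [rewrite !mulrA | rewrite mulr0 mul0r].
rewrite exchange_big /= gmulE big_seq [RHS]big_seq; apply: eq_bigr => T.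
rewrite mem_ps => sTS; rewrite reidx // gmulE (sum_ps_sub _ (fsubsetDl S T)).
rewrite mulr_sumr; apply: eq_bigr => V _; case: ifP => hV; last by rewrite mulr0.
have dTV : [disjoint T & V].
  apply/fdisjointP => x xT; apply/negP => xV; move/fsubsetP: hV => /(_ x xV).
  by rewrite !inE xT.
have e1 : (T `|` V) `\` T = V.
  apply/fsetP => x; rewrite !inE; move/fdisjointP: dTV => /(_ x).
  by case: (x \in T) => //= /(_ isT) /negbTE ->.
have e2 : S `\` (T `|` V) = (S `\` T) `\` V by rewrite fsetDDl.
have e3 : S `\` T = V `|` ((S `\` T) `\` V).
  apply/fsetP => x; rewrite !inE; move/fsubsetP: hV => /(_ x); rewrite !inE.
  by case: (x \in V) => //= /(_ isT) /andP[-> ->].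
have dVR : [disjoint V & (S `\` T) `\` V].
  by apply/fdisjointP => x xV; rewrite !inE xV.
rewrite e1 e2.
have := sgD dTV dVR; rewrite -e3 => hs.
transitivity ((sg (T `|` V) (S `\` T `\` V) * sg T V) * a T * (b V * c (S `\` T `\` V))).
  by rewrite -!mulrA.
by rewrite hs -!mulrA; congr (_ * _); rewrite mulrCA.
Qed.

Lemma ps0 S : fset0 \in ps S.
Proof. by rewrite mem_ps fsub0set. Qed.
Lemma psS S : S \in ps S.
Proof. by rewrite mem_ps fsubset_refl. Qed.

Lemma gmul_constl k a S : gmul (gconst k) a S = k * a S.
Proof.
rewrite gmulE /gconst.
rewrite (eq_bigr (fun T => if T == fset0 then k * a S else 0)).
  by rewrite (sum_ps_one (fun _ => k * a S)) // fsub0set.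
move=> T _; case: eqP => [->|]; last by rewrite mulr0 mul0r.
by rewrite /sg ginv0l expr0 mul1r fsetD0.
Qed.

Lemma gmul_constr k a S : gmul a (gconst k) S = k * a S.
Proof.
rewrite gmulE /gconst.
rewrite -[RHS](sum_ps_one (fun _ => k * a S) (fsubset_refl S)) big_seq [RHS]big_seq.
apply: eq_bigr => T; rewrite mem_ps => sTS.
have -> : (S `\` T == fset0) = (T == S).
  apply/eqP/eqP => [e|->]; last by rewrite fsetDv.
  apply/eqP; rewrite eqEfsubset sTS /=; apply/fsubsetP => x xS.
  apply/negPn/negP => xT; have : x \in S `\` T by rewrite !inE xT.
  by rewrite e inE.
case: eqP => [->|]; last by rewrite mulr0.
by rewrite fsetDv /sg ginv0r expr0 mul1r mulrC.
Qed.

Lemma gmul_suml (I : Type) (r : seq I) (F : I -> Lam) b S :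
  gmul (fun T => \sum_(i <- r) F i T) b S = \sum_(i <- r) gmul (F i) b S.
Proof.
rewrite gmulE; under eq_bigr do rewrite mulr_sumr mulr_suml.
by rewrite exchange_big.
Qed.

Lemma gmul_sumr (I : Type) (r : seq I) (F : I -> Lam) a S :
  gmul a (fun T => \sum_(i <- r) F i T) S = \sum_(i <- r) gmul a (F i) S.
Proof.
rewrite gmulE; under eq_bigr do rewrite mulr_sumr.
by rewrite exchange_big.
Qed.

Lemma gmul_scalel k a b S : gmul (fun T => k * a T) b S = k * gmul a b S.
Proof.
rewrite !gmulE mulr_sumr; apply: eq_bigr => T _.
by rewrite mulrCA !mulrA.
Qed.

Lemma gmul_scaler k a b S : gmul a (fun T => k * b T) S = k * gmul a b S.
Proof.
rewrite !gmulE mulr_sumr; apply: eq_bigr => T _.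
by rewrite mulrCA !mulrA.
Qed.

Lemma gmul_addl a a' b S : gmul (fun T => a T + a' T) b S = gmul a b S + gmul a' b S.
Proof.
by rewrite !gmulE -big_split; apply: eq_bigr => T _; rewrite mulrDr mulrDl.
Qed.

Lemma gmul_addr a b b' S : gmul a (fun T => b T + b' T) S = gmul a b S + gmul a b' S.
Proof.
by rewrite !gmulE -big_split; apply: eq_bigr => T _; rewrite mulrDr.
Qed.

Lemma gmul_subl a a' b S : gmul (fun T => a T - a' T) b S = gmul a b S - gmul a' b S.
Proof.
by rewrite !gmulE -sumrB; apply: eq_bigr => T _; rewrite mulrBr mulrBl.
Qed.

Lemma gmul_subr a b b' S : gmul a (fun T => b T - b' T) S = gmul a b S - gmul a b' S.
Proof.
by rewrite !gmulE -sumrB; apply: eq_bigr => T _; rewrite mulrBr.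
Qed.

Lemma gmul_ext a a' b b' S : (forall T, a T = a' T) -> (forall T, b T = b' T) ->
  gmul a b S = gmul a' b' S.
Proof. by move=> ea eb; rewrite !gmulE; apply: eq_bigr => T _; rewrite ea eb. Qed.

Lemma card_split T S : T `<=` S -> #|` S| = (#|` T| + #|` S `\` T|)%N.
Proof. by move=> sTS; rewrite cardfsD (fsetIidPr sTS) subnKC // fsubset_leq_card. Qed.

Lemma gpar_mul p q a b : gpar p a -> gpar q b -> gpar (p (+) q) (gmul a b).
Proof.
move=> pa pb S hS; rewrite gmulE big_seq big1 // => T; rewrite mem_ps => sTS.
case: (boolP (odd #|` T| == p)) => hT; last by rewrite pa ?mulr0 ?mul0r.
case: (boolP (odd #|` S `\` T| == q)) => hU; last by rewrite pb ?mulr0.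
move: hS; rewrite (card_split sTS) oddD (eqP hT) (eqP hU).
by rewrite eqxx.
Qed.

Lemma gpar_ext p a a' : (forall S, a S = a' S) -> gpar p a -> gpar p a'.
Proof. by move=> e h S hS; rewrite -e h. Qed.

Lemma gmul_nz a b S : gmul a b S != 0 ->
  exists T, [/\ T `<=` S, a T != 0 & b (S `\` T) != 0].
Proof.
move=> hS; case: (boolP (has (fun T => (a T != 0) && (b (S `\` T) != 0)) (ps S))).
  by case/hasP => T; rewrite mem_ps => TS /andP[h1 h2]; exists T.
move/hasPn => h; move: hS; rewrite gmulE big_seq big1 ?eqxx // => T TS.
move: (h T TS); rewrite negb_and !negbK; case/orP=> /eqP->; by rewrite ?mulr0 ?mul0r.
Qed.

Lemma gfin_mul a b : gfin a -> gfin b -> gfin (gmul a b).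
Proof.
move=> [Na ha] [Nb hb]; exists (maxn Na Nb) => S /gmul_nz [T [TS aT bT]] x xS.
case: (boolP (x \in T)) => xT.
  by rewrite leq_max (ha _ aT).
by rewrite leq_max (hb _ bT) ?orbT // !inE xT.
Qed.

Lemma gfin_ext a a' : (forall S, a S = a' S) -> gfin a -> gfin a'.
Proof. by move=> e [N h]; exists N => S; rewrite -e; apply: h. Qed.

Lemma gfin_lin k a k' a' : gfin a -> gfin a' -> gfin (fun S => k * a S + k' * a' S).
Proof.
move=> [N h] [N' h']; exists (maxn N N') => S hS x xS.
case: (boolP (a S != 0)) => aS; first by rewrite leq_max (h _ aS).
case: (boolP (a' S != 0)) => aS'; first by rewrite leq_max (h' _ aS') ?orbT.
by move: hS; rewrite (eqP (negPn aS)) (eqP (negPn aS')) !mulr0 addr0 eqxx.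
Qed.

Lemma gfin0 : gfin gzero.
Proof. by exists 0%N => S; rewrite eqxx. Qed.

Lemma gfin_const k : gfin (gconst k).
Proof.
exists 0%N => S; rewrite /gconst; case: (S =P fset0) => [->|_]; last by rewrite eqxx.
by move=> _ x; rewrite inE.
Qed.

Lemma gfin_sum (I : Type) (r : seq I) (F : I -> Lam) :
  (forall i, gfin (F i)) -> gfin (fun S => \sum_(i <- r) F i S).
Proof.
move=> h; elim: r => [|i r IH].
  by apply: (gfin_ext _ gfin0) => S; rewrite big_nil.
apply: (gfin_ext _ (gfin_lin 1 1 (h i) IH)) => S.
by rewrite big_cons !mul1r.
Qed.

Lemma gpar_lin p k a k' a' : gpar p a -> gpar p a' -> gpar p (fun S => k * a S + k' * a' S).
Proof. by move=> h h' S hS; rewrite h // h' // !mulr0 addr0. Qed.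

Lemma gpar_sum p (I : Type) (r : seq I) (F : I -> Lam) :
  (forall i, gpar p (F i)) -> gpar p (fun S => \sum_(i <- r) F i S).
Proof. by move=> h S hS; rewrite big1 // => i _; rewrite h. Qed.

Lemma gpar_const k : gpar false (gconst k).
Proof. by move=> S; rewrite /gconst; case: (S =P fset0) => // ->; rewrite cardfs0. Qed.

Lemma gpar0 p : gpar p gzero.
Proof. by []. Qed.

Lemma sum_delta (d : nat) (x : 'I_d -> C) (i : 'I_d) :
  \sum_k (i == k)%:R * x k = x i.
Proof.
rewrite (bigD1 i) //= eqxx mul1r big1 ?addr0 // => k /negbTE.
by rewrite eq_sym => ->; rewrite mul0r.
Qed.

Lemma sum_delta' (d : nat) (x : 'I_d -> C) (i : 'I_d) :
  \sum_k (k == i)%:R * x k = x i.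
Proof. by rewrite -(sum_delta x i); apply: eq_bigr => k _; rewrite eq_sym. Qed.

Notation inEnd := Defs.inE.

Section Endo.
Variables (m n : nat).
Local Notation d := (sdim m n).
Implicit Types (X Y Z W : endL m n) (v w : vecL m n).

Lemma endL_ext X Y : (forall i j S, X i j S = Y i j S) -> X = Y.
Proof.
move=> h; apply: functional_extensionality => i.
apply: functional_extensionality => j; apply: functional_extensionality => S; exact: h.
Qed.

Lemma vecL_ext v w : (forall i S, v i S = w i S) -> v = w.
Proof.
move=> h; apply: functional_extensionality => i.
apply: functional_extensionality => S; exact: h.
Qed.

Definition eId : endL m n := fun i j => gconst ((i == j)%:R).
Definition elin (k : C) X (k' : C) Y : endL m n := fun i j S => k * X i j S + k' * Y i j S.
Definition epow W (p : nat) : endL m n := iter p (mulL W) eId.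
Definition vlin (k : C) v (k' : C) w : vecL m n := fun i S => k * v i S + k' * w i S.

Lemma mulLA X Y Z : mulL (mulL X Y) Z = mulL X (mulL Y Z).
Proof.
apply: endL_ext => i j S; rewrite /mulL.
under eq_bigr do rewrite gmul_suml.
rewrite exchange_big /=; apply: eq_bigr => l _.
rewrite gmul_sumr; apply: eq_bigr => k _; exact: gmulA.
Qed.

Lemma mulL1l X : mulL eId X = X.
Proof.
apply: endL_ext => i j S; rewrite /mulL /eId.
under eq_bigr do rewrite gmul_constl.
exact: sum_delta.
Qed.

Lemma mulL1r X : mulL X eId = X.
Proof.
apply: endL_ext => i j S; rewrite /mulL /eId.
under eq_bigr do rewrite gmul_constr.
exact: sum_delta'.
Qed.

Lemma mulL_linl k X k' Y Z : mulL (elin k X k' Y) Z = elin k (mulL X Z) k' (mulL Y Z).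
Proof.
apply: endL_ext => i j S; rewrite /mulL /elin.
rewrite !mulr_sumr -big_split; apply: eq_bigr => l _ /=.
rewrite gmul_addl.
by rewrite (gmul_scalel k (X i l)) (gmul_scalel k' (Y i l)).
Qed.

Lemma mulL_linr k X k' Y Z : mulL Z (elin k X k' Y) = elin k (mulL Z X) k' (mulL Z Y).
Proof.
apply: endL_ext => i j S; rewrite /mulL /elin.
rewrite !mulr_sumr -big_split; apply: eq_bigr => l _ /=.
rewrite gmul_addr.
by rewrite (gmul_scaler k _ (X l j)) (gmul_scaler k' _ (Y l j)).
Qed.

Lemma epowS W p : epow W p.+1 = mulL W (epow W p).
Proof. by []. Qed.

Lemma epow_add W p q : epow W (p + q) = mulL (epow W p) (epow W q).
Proof.
elim: p => [|p IH]; first by rewrite add0n mulL1l.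
by rewrite addSn !epowS IH mulLA.
Qed.

Lemma epow1 W : epow W 1 = W.
Proof. by rewrite epowS mulL1r. Qed.

Lemma epowSr W p : epow W p.+1 = mulL (epow W p) W.
Proof. by rewrite -addn1 epow_add epow1. Qed.

Lemma inE_Id : inEnd eId.
Proof.
move=> i j; split; first exact: gfin_const.
case: (i =P j) => [->|ij]; first by rewrite addbb; apply: gpar_const.
by move=> S _; rewrite /eId /gconst; case: (S == fset0) => //; case: eqP.
Qed.

Lemma inE_lin k X k' Y : inEnd X -> inEnd Y -> inEnd (elin k X k' Y).
Proof.
move=> hX hY i j; have [f1 p1] := hX i j; have [f2 p2] := hY i j; split.
  exact: gfin_lin.
exact: gpar_lin.
Qed.

Lemma inE_mul X Y : inEnd X -> inEnd Y -> inEnd (mulL X Y).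
Proof.
move=> hX hY i j; split.
  apply: gfin_sum => k; apply: gfin_mul; [exact: (hX i k).1 | exact: (hY k j).1].
apply: gpar_sum => k.
have := gpar_mul (hX i k).2 (hY k j).2.
by rewrite addbA -(addbA (spar i)) addbb addbF.
Qed.

Lemma inE_pow W p : inEnd W -> inEnd (epow W p).
Proof. by move=> h; elim: p => [|p IH]; [exact: inE_Id | exact: inE_mul]. Qed.

Lemma actL_mul X Y v : actL (mulL X Y) v = actL X (actL Y v).
Proof.
apply: vecL_ext => i S; rewrite /actL /mulL.
under eq_bigr do rewrite gmul_suml.
rewrite exchange_big /=; apply: eq_bigr => l _.
rewrite gmul_sumr; apply: eq_bigr => k _; exact: gmulA.
Qed.

Lemma actL_Id v : actL eId v = v.
Proof.
apply: vecL_ext => i S; rewrite /actL /eId.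
under eq_bigr do rewrite gmul_constl.
exact: sum_delta.
Qed.

Lemma actL_lin k X k' Y v : actL (elin k X k' Y) v = vlin k (actL X v) k' (actL Y v).
Proof.
apply: vecL_ext => i S; rewrite /actL /elin /vlin.
rewrite !mulr_sumr -big_split; apply: eq_bigr => l _ /=.
by rewrite gmul_addl (gmul_scalel k (X i l)) (gmul_scalel k' (Y i l)).
Qed.

Lemma inV_act X v : inEnd X -> inV v -> inV (actL X v).
Proof.
move=> hX hv i; apply: gfin_sum => j; apply: gfin_mul; [exact: (hX i j).1|exact: hv].
Qed.

Lemma ginvol_lin (bb : bool) (k : C) (x : Lam) (k' : C) (y : Lam) S :
  ginvol bb (fun T => k * x T + k' * y T) S = k * ginvol bb x S + k' * ginvol bb y S.
Proof. by rewrite /ginvol; case: bb => //=; ring. Qed.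

Variable G : 'M[C]_(sdim m n).

Lemma formL_linl k v k' v' w S :
  formL G (vlin k v k' v') w S = k * formL G v w S + k' * formL G v' w S.
Proof.
rewrite /formL /vlin !mulr_sumr -big_split; apply: eq_bigr => i _ /=.
rewrite !mulr_sumr -big_split; apply: eq_bigr => j _ /=.
rewrite (gmul_ext (a' := fun T => k * ginvol (spar j) (v i) T + k' * ginvol (spar j) (v' i) T)
  (b' := w j)) //; last by move=> T; rewrite ginvol_lin.
rewrite gmul_addl (gmul_scalel k (ginvol _ (v i))) (gmul_scalel k' (ginvol _ (v' i))).
ring.
Qed.

Lemma formL_linr k v k' v' w S :
  formL G w (vlin k v k' v') S = k * formL G w v S + k' * formL G w v' S.
Proof.
rewrite /formL /vlin !mulr_sumr -big_split; apply: eq_bigr => i _ /=.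
rewrite !mulr_sumr -big_split; apply: eq_bigr => j _ /=.
rewrite gmul_addr (gmul_scaler k _ (v j)) (gmul_scaler k' _ (v' j)).
ring.
Qed.

Lemma adj_Id : is_adjoint G eId eId.
Proof. by split; [exact: inE_Id | move=> v w _ _; rewrite !actL_Id]. Qed.

Lemma adj_lin k X X' k' Y Y' : is_adjoint G X X' -> is_adjoint G Y Y' ->
  is_adjoint G (elin k X k' Y) (elin k X' k' Y').
Proof.
move=> [hX eX] [hY eY]; split; first exact: inE_lin.
move=> v w hv hw; rewrite !actL_lin.
apply: functional_extensionality => S.
by rewrite formL_linl formL_linr (eX v w hv hw) (eY v w hv hw).
Qed.

Lemma adj_mul X X' Y Y' : inEnd X -> inEnd Y -> is_adjoint G X X' -> is_adjoint G Y Y' ->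
  is_adjoint G (mulL X Y) (mulL Y' X').
Proof.
move=> iX iY [hX eX] [hY eY]; split; first exact: inE_mul.
move=> v w hv hw; rewrite !actL_mul eX ?eY //; [exact: inV_act | exact: inV_act].
Qed.

Lemma adj_pow W : inEnd W -> is_adjoint G W W -> forall p, is_adjoint G (epow W p) (epow W p).
Proof.
move=> iW aW; elim => [|p IH]; first exact: adj_Id.
rewrite {2}epowSr epowS; apply: adj_mul => //; exact: inE_pow.
Qed.

End Endo.
Arguments eId {m n}.

Lemma ginvol_const bb k S : ginvol bb (gconst k) S = gconst k S.
Proof.
rewrite /ginvol /gconst; case: bb => //; case: (S =P fset0) => [->|_].
  by rewrite cardfs0 expr0 mul1r.
by rewrite mulr0.
Qed.

Section Coords.
Variables (m n : nat) (G : 'M[C]_(sdim m n)) (K : nat)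
  (b : 'I_K -> 'M[C]_(sdim m n)) (q : 'I_K -> bool).
Hypothesis hb : homog_basis_sa G b q.

Definition delta (k : 'I_(sdim m n)) : vecL m n := fun i => gconst ((i == k)%:R).

Lemma inV_delta k : inV (delta k).
Proof. by move=> i; exact: gfin_const. Qed.

Lemma actL_delta (A : endL m n) k : actL A (delta k) = fun i => A i k.
Proof.
apply: vecL_ext => i S; rewrite /actL /delta.
under eq_bigr do rewrite gmul_constr.
exact: sum_delta'.
Qed.

Lemma formL_delta_r (v : vecL m n) l S :
  formL G v (delta l) S = \sum_i G i l * ginvol (spar l) (v i) S.
Proof.
rewrite /formL; apply: eq_bigr => i _; rewrite /delta.
under eq_bigr do rewrite gmul_constr mulrCA.
exact: sum_delta'.
Qed.

Lemma formL_delta_l (w : vecL m n) k S :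
  formL G (delta k) w S = \sum_j G k j * w j S.
Proof.
rewrite /formL /delta.
transitivity (\sum_i \sum_j (i == k)%:R * (G i j * w j S)).
  apply: eq_bigr => i _; apply: eq_bigr => j _.
  rewrite (gmul_ext (a' := gconst ((i == k)%:R)) (b' := w j)) //; last first.
    by move=> T; rewrite ginvol_const.
  by rewrite gmul_constl mulrCA.
rewrite (eq_bigr (fun i => (i == k)%:R * \sum_j G i j * w j S)); last first.
  by move=> i _; rewrite mulr_sumr.
exact: sum_delta'.
Qed.

Lemma adj_cond (A : endL m n) : is_adjoint G A A -> forall k l S,
  \sum_i G i l * ginvol (spar l) (A i k) S = \sum_j G k j * A j l S.
Proof.
move=> [_ h] k l S; have := h (delta k) (delta l) (inV_delta k) (inV_delta l).
rewrite !actL_delta => e.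
by rewrite -formL_delta_r e formL_delta_l.
Qed.

Lemma formC_swap (B : 'M[C]_(sdim m n)) (v w : vecC m n) :
  Defs.formC G (actC B v) w = \sum_k \sum_l (\sum_i G i l * B i k) * v k * w l.
Proof.
rewrite /Defs.formC /actC.
transitivity (\sum_i \sum_l \sum_k G i l * B i k * v k * w l).
  apply: eq_bigr => i _; apply: eq_bigr => l _.
  by rewrite mulr_sumr mulr_suml; apply: eq_bigr => k _; rewrite !mulrA.
transitivity (\sum_l \sum_k \sum_i G i l * B i k * v k * w l).
  by rewrite exchange_big /=; apply: eq_bigr => l _; rewrite exchange_big.
rewrite exchange_big /=; apply: eq_bigr => k _; apply: eq_bigr => l _.
by rewrite !mulr_suml.
Qed.

Lemma formC_swap' (B : 'M[C]_(sdim m n)) (v w : vecC m n) :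
  Defs.formC G v (actC B w) = \sum_k \sum_l (\sum_j G k j * B j l) * v k * w l.
Proof.
rewrite /Defs.formC /actC; apply: eq_bigr => k _.
transitivity (\sum_j \sum_l G k j * v k * (B j l * w l)).
  by apply: eq_bigr => j _; rewrite mulr_sumr.
rewrite exchange_big /=; apply: eq_bigr => l _.
rewrite !mulr_suml; apply: eq_bigr => j _; ring.
Qed.

Lemma selfadj0 p : selfadjC_hom G p 0.
Proof.
split; first by move=> i j _; rewrite mxE.
move=> r v w _; rewrite formC_swap formC_swap'.
rewrite !big1 ?mulr0 // => k _; rewrite big1 // => l _; rewrite big1 ?mul0r //;
  by move=> i _; rewrite mxE mulr0.
Qed.

Variable A : endL m n.
Hypothesis hA : inEplus G A.

Definition BS (S : {fset nat}) : 'M[C]_(sdim m n) :=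
  \matrix_(i, j) ((-1) ^+ (odd #|` S| && spar j) * A i j S).

Lemma BS_hom S : selfadjC_hom G (odd #|` S|) (BS S).
Proof.
have [iA aA] := hA.
split.
  move=> i j hij; rewrite mxE; have [_ pA] := iA i j.
  by rewrite pA ?mulr0 // eq_sym.
move=> r v w hv; rewrite formC_swap formC_swap' mulr_sumr; apply: eq_bigr => k _.
rewrite mulr_sumr; apply: eq_bigr => l _.
case: (boolP (spar k == r)) => hk; last by rewrite hv // !(mulr0, mul0r).
rewrite -(eqP hk) !mulrA; congr (_ * _ * _).
under eq_bigr do rewrite mxE mulrCA.
under [in RHS]eq_bigr do rewrite mxE mulrCA.
rewrite -!mulr_sumr -(adj_cond aA k l S).
rewrite /ginvol; case: (spar l); rewrite ?andbF ?andbT //.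
  rewrite -[(-1) ^+ #|` S|]signr_odd.
  under [in RHS]eq_bigr do rewrite mulrCA.
  rewrite -mulr_sumr mulrA; case: (odd #|` S|) => /=.
    by rewrite expr1 mulN1r opprK mul1r.
  by rewrite expr0 !mul1r.
by rewrite expr0 mul1r.
Qed.

Lemma BS_sa S : selfadjC G (BS S).
Proof.
case e: (odd #|` S|).
  exists 0, (BS S); rewrite add0r; split => //; split; first exact: selfadj0.
  by rewrite -e; exact: BS_hom.
exists (BS S), 0; rewrite addr0; split => //; split; last exact: selfadj0.
by rewrite -e; exact: BS_hom.
Qed.

Lemma coef_vanish (p : bool) (B : 'M[C]_(sdim m n)) (c : 'I_K -> C) :
  homogEndC p B -> B = \sum_k c k *: b k -> forall k, q k != p -> c k = 0.
Proof.
move=> hB eB.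
have hbk : forall k, homogEndC (q k) (b k) by move=> k; exact: (hb.1 k).1.
suff: \sum_k (if q k != p then c k else 0) *: b k = 0.
  move/(hb.2.1) => h k hk; by move: (h k); rewrite hk.
apply/matrixP => i j; rewrite summxE mxE.
case: (boolP ((spar i (+) spar j) == p)) => hij.
  rewrite big1 // => k _; case: ifP => hk; last by rewrite mxE mul0r.
  by rewrite mxE hbk ?mulr0 // (eqP hij) eq_sym.
have : B i j = 0 by rewrite hB.
rewrite eB summxE (bigID (fun k => q k != p)) /= => e.
rewrite -[RHS]e; rewrite [X in _ = _ + X]big1 ?addr0; last first.
  move=> k; rewrite negbK => /eqP hk; rewrite mxE hbk ?mulr0 //.
  by rewrite hk.
rewrite [RHS]big_mkcond; apply: eq_bigr => k _; rewrite !mxE; case: ifP => //.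
by rewrite mul0r.
Qed.

Lemma ex_coef S : exists c : 'I_K -> C, BS S = \sum_k c k *: b k.
Proof. exact: hb.2.2 _ (BS_sa S). Qed.

Definition cS (S : {fset nat}) : 'I_K -> C := proj1_sig (constructive_indefinite_description _ (ex_coef S)).

Lemma cS_spec S : BS S = \sum_k cS S k *: b k.
Proof. exact: proj2_sig (constructive_indefinite_description _ (ex_coef S)). Qed.

Definition lamA (k : 'I_K) : Lam := fun S => cS S k.

Lemma lamA_par k : gpar (q k) (lamA k).
Proof.
move=> S hS; apply: (coef_vanish (BS_hom S).1 (cS_spec S)).
by rewrite eq_sym.
Qed.

Lemma lamA_fin k : gfin (lamA k).
Proof.
have [iA _] := hA.
pose Nf i j := proj1_sig (constructive_indefinite_description _ (iA i j).1).
have hNf i j : forall S, A i j S != 0 -> forall x, x \in S -> (x < Nf i j)%N.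
  exact: proj2_sig (constructive_indefinite_description _ (iA i j).1).
exists (\max_i \max_j Nf i j) => S hS x xS.
case: (boolP [exists i, exists j, A i j S != 0]).
  case/existsP => i /existsP [j hij].
  apply: (leq_trans (hNf i j S hij x xS)).
  apply: (leq_trans _ (leq_bigmax i)); exact: (leq_bigmax j).
move=> h; exfalso; move: hS; rewrite /lamA.
have e0 : BS S = 0.
  apply/matrixP => i j; rewrite !mxE.
  move: h; rewrite negb_exists => /forallP /(_ i); rewrite negb_exists.
  by move/forallP /(_ j); rewrite negbK => /eqP ->; rewrite mulr0.
have := cS_spec S; rewrite e0 => /esym /(hb.2.1) ->.
by rewrite eqxx.
Qed.

Lemma coordsA : A = coordsL b q lamA.
Proof.
apply: endL_ext => i j S; rewrite /coordsL.
transitivity (\sum_k (-1) ^+ (odd #|` S| && spar j) * b k i j * lamA k S); last first.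
  apply: eq_bigr => k _; case: (boolP (q k == odd #|` S|)) => [/eqP -> //|hk].
  by rewrite lamA_par ?mulr0 // eq_sym.
under eq_bigr do rewrite -mulrA.
rewrite -mulr_sumr.
have : BS S i j = \sum_k lamA k S * b k i j.
  by rewrite {1}cS_spec summxE; apply: eq_bigr => k _; rewrite mxE.
rewrite mxE => e.
transitivity ((-1) ^+ (odd #|` S| && spar j) * ((-1) ^+ (odd #|` S| && spar j) * A i j S)).
  by rewrite mulrA -signr_addb addbb expr0 mul1r.
by rewrite e; congr (_ * _); apply: eq_bigr => k _; rewrite mulrC.
Qed.

End Coords.

Lemma coords_exist m n (G : 'M[C]_(sdim m n)) K (bs : 'I_K -> 'M[C]_(sdim m n)) (q : 'I_K -> bool) (A : endL m n) :
  homog_basis_sa G bs q -> inEplus G A -> exists lam : 'I_K -> Lam, is_coords bs q A lam.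
Proof.
move=> hb hA; exists (lamA hb hA); split; last exact: coordsA.
by move=> k; split; [exact: lamA_fin | exact: lamA_par].
Qed.

Definition isP (k : nat) (F : C -> Lam) :=
  exists pf : {fset nat} -> {poly C}, forall S u, F u S = u ^+ k * (pf S).[u].
Definition degP (D : nat) (F : C -> Lam) :=
  exists pf : {fset nat} -> {poly C},
    (forall S, (size (pf S) <= D.+1)%N) /\ forall S u, F u S = (pf S).[u].

Lemma isP_ext k F F' : (forall u S, F u S = F' u S) -> isP k F -> isP k F'.
Proof. by move=> e [pf h]; exists pf => S u; rewrite -e h. Qed.

Lemma isP_lin k F F' (e : C) : isP k F -> isP k F' ->
  isP k (fun u S => F u S + e * F' u S).
Proof.
move=> [pf h] [pf' h']; exists (fun S => pf S + e *: pf' S) => S u.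
by rewrite h h' hornerD hornerZ; ring.
Qed.

Lemma isP_const a : isP 0 (fun _ => a).
Proof. by exists (fun S => (a S)%:P) => S u; rewrite hornerC expr0 mul1r. Qed.

Lemma isP_mul k j F F' : isP k F -> isP j F' -> isP (k + j) (fun u => gmul (F u) (F' u)).
Proof.
move=> [pf h] [pf' h'].
exists (fun S => \sum_(T <- ps S) sg T (S `\` T) *: (pf T * pf' (S `\` T))) => S u.
rewrite gmulE horner_sum mulr_sumr; apply: eq_bigr => T _.
by rewrite h h' hornerZ hornerM exprD; ring.
Qed.

Lemma isP_le j k F : (j <= k)%N -> isP k F -> isP j F.
Proof.
move=> jk [pf h]; exists (fun S => 'X^(k - j) * pf S) => S u.
by rewrite h hornerM hornerXn mulrA -exprD subnKC.
Qed.

Lemma degP_ext D F F' : (forall u S, F u S = F' u S) -> degP D F -> degP D F'.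
Proof. by move=> e [pf [hs h]]; exists pf; split => // S u; rewrite -e h. Qed.

Lemma degP_lin D F F' (e : C) : degP D F -> degP D F' ->
  degP D (fun u S => F u S + e * F' u S).
Proof.
move=> [pf [s h]] [pf' [s' h']]; exists (fun S => pf S + e *: pf' S); split.
  move=> S; apply: (leq_trans (size_polyD _ _)); rewrite geq_max s /=.
  exact: (leq_trans (size_scale_leq _ _)).
by move=> S u; rewrite h h' hornerD hornerZ.
Qed.

Lemma degP_const a : degP 0 (fun _ => a).
Proof.
exists (fun S => (a S)%:P); split; last by move=> S u; rewrite hornerC.
by move=> S; rewrite size_polyC leq_b1.
Qed.

Lemma degP_le D D' F : (D <= D')%N -> degP D F -> degP D' F.
Proof. by move=> le [pf [s h]]; exists pf; split => // S; apply: (leq_trans (s S)). Qed.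

Lemma degP_mul D D' F F' : degP D F -> degP D' F' -> degP (D + D') (fun u => gmul (F u) (F' u)).
Proof.
move=> [pf [s h]] [pf' [s' h']].
exists (fun S => \sum_(T <- ps S) sg T (S `\` T) *: (pf T * pf' (S `\` T))); split.
  move=> S; apply: (leq_trans (size_sum _ _ _)); apply/bigmax_leqP_seq => T _ _.
  apply: (leq_trans (size_scale_leq _ _)); apply: (leq_trans (size_mul_leq _ _)).
  have := s T; have := s' (S `\` T); lia.
by move=> S u; rewrite gmulE horner_sum; apply: eq_bigr => T _; rewrite h h' hornerZ hornerM mulrA.
Qed.

Lemma degP_X a a' : degP 1 (fun u S => a S + u * a' S).
Proof.
exists (fun S => (a S)%:P + a' S *: 'X); split.
  move=> S; apply: (leq_trans (size_polyD _ _)); rewrite geq_max size_polyC.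
  apply/andP; split; first by case: (_ != 0).
  by apply: (leq_trans (size_scale_leq _ _)); rewrite size_polyX.
by move=> S u; rewrite hornerD hornerC hornerZ hornerX mulrC.
Qed.

Section PvalSec.
Variable K : nat.

Definition Pval (P : seq (Lam * seq 'I_K)) (lam : 'I_K -> Lam) : Lam :=
  foldr gadd gzero [seq gmul cs.1 (gprod [seq lam k | k <- cs.2]) | cs <- P].

Variables (lamF lamH : C -> 'I_K -> Lam) (e : nat).
Hypotheses (hF : forall k, isP 0 (fun u => lamF u k))
  (hH : forall k, isP 0 (fun u => lamH u k))
  (hFH : forall k, isP e (fun u S => lamF u k S - lamH u k S)).

Lemma gprod_isP (lam : C -> 'I_K -> Lam) ks : (forall k, isP 0 (fun u => lam u k)) ->
  isP 0 (fun u => gprod [seq lam u k | k <- ks]).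
Proof.
move=> h; elim: ks => [|k ks IH] /=; first exact: isP_const.
exact: (isP_mul (h k) IH).
Qed.

Lemma gprod_diff ks : isP e (fun u S =>
  gprod [seq lamF u k | k <- ks] S - gprod [seq lamH u k | k <- ks] S).
Proof.
elim: ks => [|k ks IH] /=.
  by exists (fun _ => 0) => S u; rewrite subrr horner0 mulr0.
have h1 := isP_mul (hFH k) (gprod_isP ks hF); rewrite addn0 in h1.
have h2 := isP_mul (hH k) IH; rewrite add0n in h2.
apply: (isP_ext _ (isP_lin 1 h1 h2)) => u S /=.
by rewrite gmul_subl gmul_subr mul1r addrA subrK.
Qed.

Lemma Pval_diff P : isP e (fun u S => Pval P (lamF u) S - Pval P (lamH u) S).
Proof.
elim: P => [|cs P IH] /=.
  by exists (fun _ => 0) => S u; rewrite /Pval /= /gzero subrr horner0 mulr0.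
have h1 := isP_mul (isP_const cs.1) (gprod_diff cs.2); rewrite add0n in h1.
apply: (isP_ext _ (isP_lin 1 h1 IH)) => u S /=.
rewrite /Pval /= /gadd -/(Pval P (lamF u)) -/(Pval P (lamH u)).
rewrite mul1r gmul_subr; ring.
Qed.

Lemma gprod_deg (lam : C -> 'I_K -> Lam) ks : (forall k, degP 1 (fun u => lam u k)) ->
  degP (size ks) (fun u => gprod [seq lam u k | k <- ks]).
Proof.
move=> h; elim: ks => [|k ks IH] /=; first exact: degP_const.
exact: (degP_mul (h k) IH).
Qed.

Lemma Pval_deg (lam : C -> 'I_K -> Lam) P : (forall k, degP 1 (fun u => lam u k)) ->
  degP (\max_(cs <- P) size cs.2) (fun u => Pval P (lam u)).
Proof.
move=> h; elim: P => [|cs P IH].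
  by rewrite big_nil; apply: (degP_ext _ (degP_const gzero)) => u S.
rewrite big_cons.
have h1 := degP_mul (degP_const cs.1) (gprod_deg cs.2 h); rewrite add0n in h1.
have h1' := degP_le (leq_maxl (size cs.2) (\max_(cs <- P) size cs.2)) h1.
have h2 := degP_le (leq_maxr (size cs.2) (\max_(cs <- P) size cs.2)) IH.
apply: (degP_ext _ (degP_lin 1 h1' h2)) => u S /=.
by rewrite mul1r.
Qed.

End PvalSec.

Lemma all_roots_zero (p : {poly C}) : (forall u, p.[u] = 0) -> p = 0.
Proof.
move=> h; apply/eqP; apply: contraT => hp.
have := max_poly_roots hp (rs := [seq i%:R | i <- iota 0 (size p)]).
rewrite size_map size_iota ltnn; apply.
  by apply/allP => x _; rewrite /root h.
rewrite map_inj_uniq ?iota_uniq // => i j /eqP; rewrite Num.Theory.eqr_nat.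
by move/eqP.
Qed.

Lemma poly_final (D : nat) (H F : C -> Lam) : degP D H ->
  isP D.+1 (fun u S => F u S - H u S) -> (forall u S, F u S = 0) -> forall S, H 1 S = 0.
Proof.
move=> [ph [sh eh]] [pr er] hF S.
have e : ph S + pr S * 'X^(D.+1) = 0.
  apply: all_roots_zero => u; move: (er S u); rewrite hF eh sub0r => e.
  by rewrite hornerD hornerM hornerXn [_ * u ^+ _]mulrC -e -eh addrN.
case: (eqVneq (pr S) 0) => hr.
  by move: e; rewrite hr mul0r addr0 => e; rewrite eh e horner0.
exfalso; have := sh S.
have -> : ph S = - (pr S * 'X^(D.+1)) by apply/eqP; rewrite -addr_eq0 e.
rewrite size_polyN size_mulXn //.
have : (0 < size (pr S))%N by rewrite size_poly_gt0.
move=> h1; rewrite -{2}(addn0 D.+1) leq_add2l; by rewrite leqNgt h1.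
Qed.

Lemma sqrt_coef (d : nat) : exists a : nat -> C, a 0%N = 1 /\
  forall s, (s <= d)%N -> \sum_(i < s.+1) a i * a (s - i)%N = (s == 0%N)%:R + (s == 1%N)%:R.
Proof.
elim: d => [|d [a [a0 ha]]].
  exists (fun i => (i == 0%N)%:R); split => // s; rewrite leqn0 => /eqP ->.
  by rewrite big_ord1 /= mulr1 addr0.
pose mid := \sum_(i < d) a i.+1 * a (d - i)%N.
pose x := ((d.+1 == 1%N)%:R - mid) / 2.
exists (fun i => if i == d.+1 then x else a i); split => // s hs.
case: (boolP (s <= d)%N) => hsd.
  rewrite -ha //; apply: eq_bigr => i _.
  have hi : (i <= d)%N by have := ltn_ord i; lia.
  rewrite (_ : (i : nat) == d.+1 = false); last by apply/negbTE; lia.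
  by rewrite (_ : (s - i)%N == d.+1 = false) //; apply/negbTE; lia.
have -> : s = d.+1 by lia.
rewrite big_ord_recl big_ord_recr /= subn0 subnn eqxx /=.
rewrite (eq_bigr (fun i : 'I_d => a i.+1 * a (d - i)%N)); last first.
  move=> i _; rewrite /bump /= add1n subSS.
  rewrite (_ : (i.+1 == d.+1) = false); last by apply/negbTE; have := ltn_ord i; lia.
  by rewrite (_ : (d - i)%N == d.+1 = false) //; apply/negbTE; lia.
rewrite -/mid a0 /x mul1r mulr1.
have h2 : (2 : C) != 0 by rewrite Num.Theory.pnatr_eq0.
by field.
Qed.

Lemma sum_ind_ord N (s : nat) (c : nat -> C) : (s < N)%N ->
  \sum_(j < N) ((j : nat) == s)%:R * c j = c s.
Proof.
move=> hs; rewrite (bigD1 (Ordinal hs)) //= eqxx mul1r big1 ?addr0 // => j hj.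
rewrite (_ : ((j : nat) == s) = false) ?mul0r //; apply/negbTE.
by apply: contra hj => /eqP e; apply/eqP/val_inj.
Qed.

Section Main.
Variables (m n : nat) (G : 'M[C]_(sdim m n)).

Definition ecomb (cf : nat -> C) (N : nat) (W : endL m n) : endL m n :=
  fun i j S => \sum_(p < N) cf p * epow W p i j S.

Lemma ecomb_rec cf N W : ecomb cf N.+1 W = elin 1 (ecomb cf N W) (cf N) (epow W N).
Proof. by apply: endL_ext => i j S; rewrite /ecomb /elin big_ord_recr /= mul1r. Qed.

Lemma ecomb0 cf W : ecomb cf 0 W = elin 0 eId 0 eId.
Proof. by apply: endL_ext => i j S; rewrite /ecomb /elin big_ord0 !mul0r addr0. Qed.

Lemma ecomb_inE cf N W : inEnd W -> inEnd (ecomb cf N W).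
Proof.
move=> iW; elim: N => [|N IH]; first by rewrite ecomb0; apply: inE_lin; exact: inE_Id.
rewrite ecomb_rec; apply: inE_lin => //; exact: inE_pow.
Qed.

Lemma ecomb_adj cf N W : inEnd W -> is_adjoint G W W -> is_adjoint G (ecomb cf N W) (ecomb cf N W).
Proof.
move=> iW aW; elim: N => [|N IH]; first by rewrite ecomb0; apply: adj_lin; exact: adj_Id.
rewrite ecomb_rec; apply: adj_lin => //; exact: adj_pow.
Qed.

Lemma ecomb_sq cf N W i j S : mulL (ecomb cf N W) (ecomb cf N W) i j S =
  \sum_(p < N) \sum_(p' < N) (cf p * cf p') * epow W (p + p') i j S.
Proof.
rewrite /mulL /ecomb.
transitivity (\sum_k \sum_(p < N) \sum_(p' < N) cf p * cf p' * gmul (epow W p i k) (epow W p' k j) S).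
  apply: eq_bigr => k _; rewrite gmul_suml; apply: eq_bigr => p _.
  rewrite (gmul_scalel (cf p) (epow W p i k)) gmul_sumr mulr_sumr; apply: eq_bigr => p' _.
  by rewrite (gmul_scaler (cf p') _ (epow W p' k j)) mulrA.
rewrite exchange_big /=; apply: eq_bigr => p _.
rewrite exchange_big /=; apply: eq_bigr => p' _.
by rewrite epow_add /mulL mulr_sumr.
Qed.

End Main.

Lemma regroup N (h : nat -> nat -> C) (g : nat -> C) :
  \sum_(p < N) \sum_(p' < N) h p p' * g (p + p')%N =
  \sum_(s < N + N) (\sum_(p < N) \sum_(p' < N) ((p + p')%N == s)%:R * h p p') * g s.
Proof.
transitivity (\sum_(p < N) \sum_(p' < N) \sum_(s < N + N) ((s : nat) == (p + p')%N)%:R * (h p p' * g s)).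
  apply: eq_bigr => p _; apply: eq_bigr => p' _.
  rewrite (sum_ind_ord (fun s => h p p' * g s)) //.
  have := ltn_ord p; have := ltn_ord p'; lia.
under eq_bigr do rewrite exchange_big /=.
rewrite exchange_big /=; apply: eq_bigr => s _.
rewrite !mulr_suml; apply: eq_bigr => p _; rewrite mulr_suml; apply: eq_bigr => p' _.
by rewrite eq_sym mulrA.
Qed.

Lemma kappa_low (a : nat -> C) d
  (ha : forall s, (s <= d)%N -> \sum_(i < s.+1) a i * a (s - i)%N = (s == 0%N)%:R + (s == 1%N)%:R)
  s : (s <= d)%N ->
  \sum_(p < d.+1) \sum_(p' < d.+1) ((p + p')%N == s)%:R * (a p * a p') = (s == 0%N)%:R + (s == 1%N)%:R.
Proof.
move=> hs; rewrite -ha //.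
transitivity (\sum_(p < d.+1) (if (p <= s)%N then a p * a (s - p)%N else 0)).
  apply: eq_bigr => p _; case: ifP => hp.
    rewrite (eq_bigr (fun p' : 'I_d.+1 => ((p' : nat) == (s - p)%N)%:R * (a p * a p'))).
      by rewrite (sum_ind_ord (fun p' => a p * a p')) //; lia.
    move=> p' _; congr (_%:R * _); apply/eqP/eqP; lia.
  rewrite big1 // => p' _; rewrite (_ : (p + p')%N == s = false) ?mul0r //.
  by apply/negbTE; move/negbT: hp; lia.
rewrite (big_ord_widen d.+1 (fun i => a i * a (s - i)%N)) ?ltnS // [RHS]big_mkcond.
by apply: eq_bigr => i _; rewrite ltnS.
Qed.

Lemma gfin_scale k a : gfin a -> gfin (fun S => k * a S).
Proof.
move=> h; apply: (gfin_ext _ (gfin_lin k 0 h h)) => S; by rewrite mul0r addr0.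
Qed.

Lemma gpar_scale p k a : gpar p a -> gpar p (fun S => k * a S).
Proof. by move=> h S hS; rewrite h // mulr0. Qed.

Lemma coordsL_comb m n K (b : 'I_K -> 'M[C]_(sdim m n)) q M (w : nat -> C)
  (Ls : nat -> 'I_K -> Lam) i j S :
  coordsL b q (fun k S => \sum_(s < M) w s * Ls s k S) i j S =
  \sum_(s < M) w s * coordsL b q (Ls s) i j S.
Proof.
rewrite /coordsL; under eq_bigr do rewrite mulr_sumr.
rewrite exchange_big /=; apply: eq_bigr => s _; rewrite mulr_sumr.
by apply: eq_bigr => k _; ring.
Qed.

Theorem lemma6p5 (m n : nat) (G : 'M[C]_(sdim m n)) (K : nat)
    (b : 'I_K -> 'M[C]_(sdim m n)) (q : 'I_K -> bool) (f : endL m n -> Lam) :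
  even_form G -> supersym_form G -> nondeg_form G ->
  homog_basis_sa G b q ->
  polyfun G b q f ->
  (forall A : endL m n, inEplus G A -> in_omega_image G A -> f A = gzero) ->
  forall A : endL m n, inEplus G A -> f A = gzero.
Proof.
move=> _ _ _ hb [P [_ hP]] hvan A hA.
pose D := \max_(cs <- P) size cs.2.
pose d := D.+1.
pose N := d.+1.
have [a [a0 ha]] := sqrt_coef d.
pose W : endL m n := elin 1 A (-1) eId.
have iW : inEnd W by apply: inE_lin; [exact: hA.1 | exact: inE_Id].
have aW : is_adjoint G W W by apply: adj_lin; [exact: hA.2 | exact: adj_Id].
have hL : forall s, exists lam, is_coords b q (epow W s) lam.
  move=> s; apply: coords_exist hb _; split; [exact: inE_pow | exact: adj_pow].
pose L s := proj1_sig (constructive_indefinite_description _ (hL s)).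
have hLs : forall s, is_coords b q (epow W s) (L s).
  move=> s; exact: proj2_sig (constructive_indefinite_description _ (hL s)).
pose kap s := \sum_(p < N) \sum_(p' < N) ((p + p')%N == s)%:R * (a p * a p').
pose X u := ecomb (fun p => a p * u ^+ p) N W.
pose lamF u k S := \sum_(s < N + N) (kap s * u ^+ s) * L s k S.
pose lamH u k S := L 0%N k S + u * L 1%N k S.
have hsq : forall u, mulL (X u) (X u) = coordsL b q (lamF u).
  move=> u; apply: endL_ext => i j S.
  rewrite /lamF (coordsL_comb b q (N + N) (fun s => kap s * u ^+ s) L) ecomb_sq.
  rewrite (eq_bigr (fun p : 'I_N => \sum_(p' < N) (a p * a p') * (u ^+ (p + p')%N * epow W (p + p')%N i j S))); last first.
    by move=> p _; apply: eq_bigr => p' _; rewrite exprD; ring.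
  rewrite (regroup N (fun p p' => a p * a p') (fun s => u ^+ s * epow W s i j S)).
  by apply: eq_bigr => s _; rewrite -(hLs s).2 /kap mulrA.
have hFval : forall u S, Pval P (lamF u) S = 0.
  move=> u S.
  have hc : is_coords b q (mulL (X u) (X u)) (lamF u).
    split; last exact: hsq.
    move=> k; split.
      apply: gfin_sum => s; apply: gfin_scale; exact: ((hLs s).1 k).1.
    apply: gpar_sum => s; apply: gpar_scale; exact: ((hLs s).1 k).2.
  have hXi : inEnd (X u) by exact: ecomb_inE.
  have hXa : is_adjoint G (X u) (X u) by exact: ecomb_adj.
  have hEp : inEplus G (mulL (X u) (X u)).
    split; [exact: inE_mul | exact: adj_mul].
  have := hP _ _ hEp hc; rewrite hvan //; last by exists (X u), (X u).
  by move=> e; rewrite /Pval -e.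
have hsplit : forall u k S, lamF u k S = lamH u k S +
    \sum_(s < N + N | ~~ (s <= d)%N) (kap s * u ^+ s) * L s k S.
  move=> u k S; rewrite /lamF (bigID (fun s : 'I_(N + N) => (s <= d)%N)) /=; congr (_ + _).
  rewrite big_mkcond /=.
  rewrite (eq_bigr (fun s : 'I_(N + N) => ((s : nat) == 0%N)%:R * L 0%N k S +
     ((s : nat) == 1%N)%:R * (u * L 1%N k S))).
    rewrite big_split /= (sum_ind_ord (fun _ => L 0%N k S)) //.
    by rewrite (sum_ind_ord (fun _ => u * L 1%N k S)).
  move=> s _; case: ifP => hs.
    rewrite /kap kappa_low //.
    case: (eqVneq (s : nat) 0%N) => [->|h0]; first by rewrite expr0 /=; ring.
    case: (eqVneq (s : nat) 1%N) => [->|h1]; first by rewrite expr1 /=; ring.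
    by rewrite /=; ring.
  rewrite (_ : ((s : nat) == 0%N) = false); last by apply/negbTE; move/negbT: hs; lia.
  rewrite (_ : ((s : nat) == 1%N) = false); last by apply/negbTE; move/negbT: hs; lia.
  by rewrite /=; ring.
have hH0 : forall k, isP 0 (fun u => lamH u k).
  move=> k; exists (fun S => (L 0%N k S)%:P + L 1%N k S *: 'X) => S u.
  by rewrite expr0 mul1r hornerD hornerC hornerZ hornerX mulrC.
have hdiff : forall k, isP d.+1 (fun u S => lamF u k S - lamH u k S).
  move=> k; exists (fun S => \sum_(s < N + N | ~~ (s <= d)%N) (kap s * L s k S) *: 'X^(s - d.+1)) => S u.
  rewrite hsplit addrAC subrr add0r horner_sum mulr_sumr; apply: eq_bigr => s hs.
  rewrite hornerZ hornerXn.
  have e : u ^+ s = u ^+ d.+1 * u ^+ (s - d.+1) by rewrite -exprD subnKC //; lia.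
  by rewrite e; ring.
have hF0 : forall k, isP 0 (fun u => lamF u k).
  move=> k; apply: (isP_ext _ (isP_lin 1 (hH0 k) (isP_le (leq0n _) (hdiff k)))).
  by move=> u S; rewrite mul1r addrC subrK.
have hdeg := Pval_deg P (fun k => degP_X (L 0%N k) (L 1%N k)).
have hPd := Pval_diff hF0 hH0 hdiff P.
have hPd' := isP_le (leqnSn _) hPd.
have fin := poly_final hdeg hPd' hFval.
have hcA : is_coords b q A (lamH 1).
  split.
    move=> k; split.
      apply: (gfin_ext _ (gfin_lin 1 1 ((hLs 0%N).1 k).1 ((hLs 1%N).1 k).1)).
      by move=> S; rewrite /lamH mul1r.
    apply: (gpar_ext _ (gpar_lin 1 1 ((hLs 0%N).1 k).2 ((hLs 1%N).1 k).2)).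
    by move=> S; rewrite /lamH mul1r.
  apply: endL_ext => i j S.
  have -> : coordsL b q (lamH 1) i j S = coordsL b q (L 0%N) i j S + coordsL b q (L 1%N) i j S.
    rewrite /coordsL -big_split; apply: eq_bigr => k _ /=; rewrite /lamH; ring.
  rewrite -(hLs 0%N).2 -(hLs 1%N).2 /= mulL1r /W /elin /eId.
  ring.
rewrite (hP _ _ hA hcA).
apply: functional_extensionality => S; exact: (fin S).
Qed.
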